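(* Let $\mathcal{N}$ be a finite set of polyphase nodes, each with the same finite set of phases $\mathcal{P}$, and let the branch graph $\mathcal{B}=(\mathcal{N},\mathcal{L})$, $\mathcal{L}\subseteq\mathcal{N}\times\mathcal{N}$, be weakly connected. Assume: (i) every branch $\ell\in\mathcal{L}$ has a complex $|\mathcal{P}|\times|\mathcal{P}|$ compound impedance matrix $Z_\ell$ with $Z_\ell=Z_\ell^{T}$, $Z_\ell$ invertible with $Y_\ell:=Z_\ell^{-1}$, and $\mathrm{Re}\{Z_\ell\}\succ 0$ (positive definite); (ii) every shunt $t\in\mathcal{T}$ (one per node) has a complex $|\mathcal{P}|\times|\mathcal{P}|$ compound admittance matrix $Y_t$ which is either $0$ or satisfies $Y_t=Y_t^{T}$, $Y_t$ invertible, and $\mathrm{Re}\{Y_t\}\succeq 0$. Let $Y=(A_{\mathcal{B}}^{\mathcal{P}})^{T}Y_{\mathcal{L}}A_{\mathcal{B}}^{\mathcal{P}}+Y_{\mathcal{T}}$ be the compound admittance matrix, and let $V,I\in\mathbb{C}^{|\mathcal{N}||\mathcal{P}|}$ satisfy $I=YV$. Let $\mathcal{Z}\subsetneq\mathcal{N}$, $\mathcal{Z}\neq\emptyset$, be such that $I_{\mathcal{Z}}=0$, and let $\mathcal{Z}^{\complement}:=\mathcal{N}\setminus\mathcal{Z}$. Then $Y_{\mathcal{Z}\times\mathcal{Z}}$ is invertible, $$V_{\mathcal{Z}}=-Y_{\mathcal{Z}\times\mathcal{Z}}^{-1}Y_{\mathcal{Z}\times\mathcal{Z}^{\complement}}V_{\mathcal{Z}^{\complement}},$$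 and $$I_{\mathcal{Z}^{\complement}}=(Y/Y_{\mathcal{Z}\times\mathcal{Z}})\,V_{\mathcal{Z}^{\complement}},\qquad Y/Y_{\mathcal{Z}\times\mathcal{Z}}:=Y_{\mathcal{Z}^{\complement}\times\mathcal{Z}^{\complement}}-Y_{\mathcal{Z}^{\complement}\times\mathcal{Z}}Y_{\mathcal{Z}\times\mathcal{Z}}^{-1}Y_{\mathcal{Z}\times\mathcal{Z}^{\complement}}.$$
   Context: Model of a polyphase power grid with an effectively grounded neutral conductor (neutral-to-ground voltage zero, connected to the reference points of all sources), so phase-to-ground voltages describe the system. $V_{n,p}$ and $I_{n,p}$ denote the complex phasors of the phase-to-ground voltage and injected current in phase $p$ of node $n$; $V_n=\mathrm{col}_{p\in\mathcal{P}}(V_{n,p})$, $V=\mathrm{col}_{n\in\mathcal{N}}(V_n)$, and similarly $I_n$, $I$. The shunts are $\mathcal{T}=\mathcal{N}\times\{\mathcal{G}\}$ where $\mathcal{G}$ is the ground node (one shunt from each node to ground). $A_{\mathcal{B}}$ is the edge-to-vertex incidence matrix of the directed graph $\mathcal{B}$ (row for branch $\ell=(m,n)$ has $+1$ in column $m$, $-1$ in column $n$, zeros elsewhere); $A_{\mathcal{B}}^{\mathcal{P}}:=A_{\mathcal{B}}\otimes I_{|\mathcal{P}|}$ (Kronecker product with the $|\mathcal{P}|\times|\mathcal{P}|$ identity). $Y_{\mathcal{L}}:=\mathrm{diag}_{\ell\in\mathcal{L}}(Y_\ell)$ and $Y_{\mathcal{T}}:=\mathrm{diag}_{t\in\mathcal{T}}(Y_t)$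 are block-diagonal. For disjoint node subsets $\mathcal{A},\mathcal{B}'\subseteq\mathcal{N}$, $I_{\mathcal{A}}$, $V_{\mathcal{B}'}$ and $Y_{\mathcal{A}\times\mathcal{B}'}$ denote the corresponding sub-blocks (all phases of the nodes in those sets). $\succ 0$ / $\succeq 0$ denote positive definite / semidefinite. *)

(* Defs.v *)
(* Complex numbers: an arbitrary numClosedFieldType C
   (e.g. algC); 'Re is the real part. *)
From HB Require Import structures.
From mathcomp Require Import all_boot all_order all_algebra.
Set Implicit Arguments. Unset Strict Implicit. Unset Printing Implicit Defensive.
Import Order.TTheory GRing.Theory Num.Theory.
Local Open Scope ring_scope.

(* Split a global index k : 'I_(m*p) into (node, phase). *)
Definition gsplit (m p : nat) (k : 'I_(m * p)) : 'I_m * 'I_p :=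
  enum_val (cast_ord (esym (mxvec_cast m p)) k).

Definition kron_id (R : pzRingType) (r s p : nat) (A : 'M[R]_(r, s)) : 'M[R]_(r * p, s * p) :=
  \matrix_(k, l) (A (gsplit k).1 (gsplit l).1 * ((gsplit k).2 == (gsplit l).2)%:R).

Definition blkdiag (R : pzRingType) (m p : nat) (F : 'I_m -> 'M[R]_p) : 'M[R]_(m * p) :=
  \matrix_(k, l) (((gsplit k).1 == (gsplit l).1)%:R * F (gsplit k).1 (gsplit k).2 (gsplit l).2).

Definition incidence (R : pzRingType) (n : nat) (L : {set 'I_n * 'I_n}) : 'M[R]_(#|L|, n) :=
  \matrix_(l, j) ((j == (enum_val l).1)%:R - (j == (enum_val l).2)%:R).

Definition admittance (C : numClosedFieldType) (n p : nat) (L : {set 'I_n * 'I_n})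
  (Zl : 'I_n * 'I_n -> 'M[C]_p) (Yt : 'I_n -> 'M[C]_p) : 'M[C]_(n * p) :=
  (kron_id p (incidence C L))^T
    *m blkdiag (fun l : 'I_#|L| => invmx (Zl (enum_val l)))
    *m kron_id p (incidence C L)
  + blkdiag Yt.

(* Global index of (k-th element of S, phase) for a node set S. *)
Definition sidx (n p : nat) (S : {set 'I_n}) (k : 'I_(#|S| * p)) : 'I_(n * p) :=
  mxvec_index (enum_val (gsplit k).1) (gsplit k).2.

Definition subblock (R : Type) (n p : nat) (S W : {set 'I_n}) (M : 'M[R]_(n * p)) :
  'M[R]_(#|S| * p, #|W| * p) := mxsub (@sidx n p S) (@sidx n p W) M.

Definition subvec (R : Type) (n p : nat) (S : {set 'I_n}) (v : 'cV[R]_(n * p)) :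
  'cV[R]_(#|S| * p) := rowsub (@sidx n p S) v.

Definition mxRe (C : numClosedFieldType) (r s : nat) (M : 'M[C]_(r, s)) : 'M[C]_(r, s) :=
  map_mx (fun z => 'Re z) M.

Definition posdef (C : numClosedFieldType) (p : nat) (M : 'M[C]_p) : Prop :=
  (forall i j, M i j \is Num.real) /\ M^T = M /\
  forall x : 'cV[C]_p, (forall i, x i 0 \is Num.real) -> x != 0 -> 0 < (x^T *m M *m x) 0 0.

Definition possemidef (C : numClosedFieldType) (p : nat) (M : 'M[C]_p) : Prop :=
  (forall i j, M i j \is Num.real) /\ M^T = M /\
  forall x : 'cV[C]_p, (forall i, x i 0 \is Num.real) -> 0 <= (x^T *m M *m x) 0 0.

Definition weakly_connected (n : nat) (L : {set 'I_n * 'I_n}) : Prop :=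
  forall i j : 'I_n, connect [rel a b | ((a, b) \in L) || ((b, a) \in L)] i j.

(* Main.v *)
Require Import Defs.
From HB Require Import structures.
From mathcomp Require Import all_boot all_order all_algebra.
From mathcomp Require Import ring.
Set Implicit Arguments. Unset Strict Implicit. Unset Printing Implicit Defensive.
Import Order.TTheory GRing.Theory Num.Theory.
Local Open Scope ring_scope.

Lemma gsplitK (m p : nat) (i : 'I_m) (q : 'I_p) : gsplit (mxvec_index i q) = (i, q).
Proof. by rewrite /gsplit /mxvec_index cast_ordK enum_rankK. Qed.

Lemma gsplitV (m p : nat) (k : 'I_(m * p)) : mxvec_index (gsplit k).1 (gsplit k).2 = k.
Proof. by case/mxvec_indexP: k => i q; rewrite gsplitK. Qed.

Lemma sum_mxvec (R : nmodType) (m p : nat) (F : 'I_(m * p) -> R) :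
  \sum_k F k = \sum_i \sum_q F (mxvec_index i q).
Proof.
rewrite pair_big /=.
rewrite (reindex (fun ij : 'I_m * 'I_p => mxvec_index ij.1 ij.2)) //=.
exists (@gsplit m p) => [[i q] _ | k _]; by rewrite ?gsplitK ?gsplitV.
Qed.

Lemma sidxE (n p : nat) (S : {set 'I_n}) (i : 'I_#|S|) (q : 'I_p) :
  @sidx n p S (mxvec_index i q) = mxvec_index (enum_val i) q.
Proof. by rewrite /sidx gsplitK. Qed.

Lemma sum_sidx (R : nmodType) (n p : nat) (S : {set 'I_n}) (F : 'I_(n * p) -> R) :
  \sum_k F (@sidx n p S k) = \sum_(a in S) \sum_q F (mxvec_index a q).
Proof.
rewrite sum_mxvec (big_enum_val (fun a => \sum_q F (mxvec_index a q))) /=.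
by apply: eq_bigr => i _; apply: eq_bigr => q _; rewrite sidxE.
Qed.

Lemma sum_split (R : nmodType) (n p : nat) (S : {set 'I_n}) (F : 'I_(n * p) -> R) :
  \sum_k F k = \sum_k F (@sidx n p S k) + \sum_k F (@sidx n p (~: S) k).
Proof.
rewrite !sum_sidx sum_mxvec (bigID (fun a => a \in S)) /=.
by congr (_ + _); apply: eq_bigl => a; rewrite in_setC.
Qed.

Lemma sidx_inj (n p : nat) (S : {set 'I_n}) : injective (@sidx n p S).
Proof.
move=> k k' /(congr1 (@gsplit n p)); rewrite /sidx !gsplitK => -[/enum_val_inj e1 e2].
by rewrite -(gsplitV k) -(gsplitV k') e1 e2.
Qed.

Lemma sidx_disj (n p : nat) (S : {set 'I_n}) k k' : @sidx n p S k != @sidx n p (~: S) k'.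
Proof.
apply/eqP => /(congr1 (@gsplit n p)); rewrite /sidx !gsplitK => -[e _].
have := enum_valP (gsplit k').1; rewrite -e in_setC.
by rewrite (enum_valP (gsplit k).1).
Qed.

Lemma subvec_mul (C : pzRingType) (n p : nat) (S : {set 'I_n}) (M : 'M[C]_(n * p)) v :
  subvec S (M *m v) = subblock S S M *m subvec S v + subblock S (~: S) M *m subvec (~: S) v.
Proof.
apply/matrixP => i j; rewrite /subvec /subblock /mxsub !mxE (sum_split S).
by congr (_ + _); apply: eq_bigr => k _; rewrite !mxE.
Qed.
Section Herm.
Variable C : numClosedFieldType.

Definition hf (m : nat) (M : 'M[C]_m) (u : 'cV[C]_m) : C :=
  ((map_mx Num.conj u)^T *m M *m u) 0 0.

Lemma hfE m (M : 'M[C]_m) u : hf M u = \sum_i \sum_j (u i 0)^* * M i j * u j 0.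
Proof.
rewrite /hf mxE; under eq_bigr => j _ do rewrite mxE mulr_suml.
rewrite exchange_big; apply: eq_bigr => i _; apply: eq_bigr => j _; by rewrite !mxE.
Qed.

Lemma hfD m (M1 M2 : 'M[C]_m) u : hf (M1 + M2) u = hf M1 u + hf M2 u.
Proof. by rewrite /hf mulmxDr mulmxDl mxE. Qed.

Lemma hf0 m (u : 'cV[C]_m) : hf 0 u = 0.
Proof. by rewrite /hf mulmx0 mul0mx mxE. Qed.

Lemma hf_Re m (M : 'M[C]_m) u : M^T = M -> 'Re (hf M u) = hf (mxRe M) u.
Proof.
move=> HM.
have sym i j : M j i = M i j by rewrite -{1}HM mxE.
rewrite [LHS]ReE.
have -> : (hf M u)^* = \sum_i \sum_j (u i 0)^* * (M i j)^* * u j 0.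
  rewrite hfE rmorph_sum exchange_big /=; apply: eq_bigr => i _.
  rewrite rmorph_sum; apply: eq_bigr => j _; rewrite !rmorphM /=. rewrite (_ : (u i 0)^*^* = u i 0); last exact: conjCK. rewrite /= sym; ring.
rewrite [RHS]hfE hfE -big_split mulr_suml; apply: eq_bigr => i _.
rewrite -big_split mulr_suml; apply: eq_bigr => j _; rewrite /= !mxE ReE; ring.
Qed.

Lemma cross (c d r : C) : c^* * r * d = 'Re c * r * 'Re d + 'Im c * r * 'Im d
  + 'i * ('Re c * r * 'Im d - 'Im c * r * 'Re d).
Proof.
have hi : 'i * 'i = -1 :> C by rewrite -expr2 sqrCi.
rewrite {1}[c]Crect {1}[d]Crect rmorphD rmorphM /= conjCi !conj_Creal ?Creal_Re ?Creal_Im //.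
transitivity ('Re c * r * 'Re d + 'Im c * r * 'Im d
  + 'i * ('Re c * r * 'Im d - 'Im c * r * 'Re d) - ('i * 'i + 1) * ('Im c * r * 'Im d)).
  ring.
by rewrite hi addNr mul0r subr0.
Qed.

Lemma hf_real_split m (M : 'M[C]_m) u : M^T = M ->
  hf M u = hf M (map_mx (fun z => 'Re z) u) + hf M (map_mx (fun z => 'Im z) u).
Proof.
move=> HM.
have sym i j : M j i = M i j by rewrite -{1}HM mxE.
rewrite !hfE.
transitivity (\sum_i \sum_j ('Re (u i 0) * M i j * 'Re (u j 0))
  + \sum_i \sum_j ('Im (u i 0) * M i j * 'Im (u j 0))
  + 'i * \sum_i \sum_j ('Re (u i 0) * M i j * 'Im (u j 0) - 'Im (u i 0) * M i j * 'Re (u j 0))).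
  rewrite mulr_sumr -!big_split; apply: eq_bigr => i _.
  rewrite mulr_sumr -!big_split; apply: eq_bigr => j _; by rewrite cross.
have -> : \sum_i \sum_j ('Re (u i 0) * M i j * 'Im (u j 0) - 'Im (u i 0) * M i j * 'Re (u j 0)) = 0.
  under eq_bigr => i _ do rewrite sumrB.
  rewrite sumrB; apply/eqP; rewrite subr_eq0; apply/eqP.
  rewrite exchange_big; apply: eq_bigr => i _; apply: eq_bigr => j _.
  rewrite /= sym; ring.
rewrite mulr0 addr0; congr (_ + _); apply: eq_bigr => i _; apply: eq_bigr => j _;
  by rewrite !mxE !conj_Creal ?Creal_Re ?Creal_Im.
Qed.

Lemma hf_real m (M : 'M[C]_m) (a : 'cV[C]_m) : (forall i, a i 0 \is Num.real) ->
  hf M a = (a^T *m M *m a) 0 0.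
Proof.
move=> ar; rewrite /hf; congr (((_)^T *m _ *m _) 0 0).
by apply/matrixP => i j; rewrite mxE (ord1 j) conj_Creal.
Qed.

Lemma hf_posdef m (M : 'M[C]_m) u : posdef M -> u != 0 -> 0 < hf M u.
Proof.
case=> _ [MT Mpos] unz; rewrite (hf_real_split _ MT) !hf_real;
  try by move=> i; rewrite mxE ?Creal_Re ?Creal_Im.
set a := map_mx _ u; set b := map_mx _ u.
have ar : forall i, a i 0 \is Num.real by move=> i; rewrite mxE Creal_Re.
have br : forall i, b i 0 \is Num.real by move=> i; rewrite mxE Creal_Im.
have ge0 (x : 'cV[C]_m) : (forall i, x i 0 \is Num.real) -> 0 <= (x^T *m M *m x) 0 0.
  move=> xr; have [->|xnz] := eqVneq x 0; first by rewrite mulmx0 mxE.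
  exact/ltW/Mpos.
have [a0|anz] := eqVneq a 0.
  have bnz : b != 0.
    apply: contra unz => /eqP b0; apply/eqP/matrixP => i j.
    rewrite (ord1 j) mxE [u i 0]Crect.
    have := congr1 (fun A : 'cV[C]_m => A i 0) a0; have := congr1 (fun A : 'cV[C]_m => A i 0) b0.
    by rewrite !mxE => -> ->; rewrite mulr0 addr0.
  by apply: ltr_wpDl; [exact: ge0 | exact: Mpos].
by apply: ltr_pwDl; [exact: Mpos | exact: ge0].
Qed.

Lemma hf_psd m (M : 'M[C]_m) u : possemidef M -> 0 <= hf M u.
Proof.
case=> _ [MT Mpos]; rewrite (hf_real_split _ MT) !hf_real;
  try by move=> i; rewrite mxE ?Creal_Re ?Creal_Im.
by apply: addr_ge0; apply: Mpos => i; rewrite mxE ?Creal_Re ?Creal_Im.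
Qed.

Lemma hf_inv m (M : 'M[C]_m) w : M \in unitmx ->
  hf (invmx M) (M *m w) = hf ((map_mx Num.conj M)^T) w.
Proof.
move=> Mu; rewrite /hf map_mxM trmx_mul -!mulmxA (mulmxA (invmx M)) mulVmx //.
by rewrite mul1mx !mulmxA.
Qed.

Lemma key_pos m (M : 'M[C]_m) u : M^T = M -> M \in unitmx -> posdef (mxRe M) ->
  u != 0 -> 0 < 'Re (hf (invmx M) u).
Proof.
move=> MT Mu Mpd unz.
have -> : u = M *m (invmx M *m u) by rewrite mulKVmx.
rewrite hf_inv // map_trmx MT hf_Re; last by rewrite map_trmx MT.
have -> : mxRe (map_mx Num.conj M) = mxRe M by apply/matrixP => i j; rewrite !mxE Re_conj.
apply: hf_posdef => //; apply: contra unz => /eqP w0; by rewrite -(mulKVmx Mu u) w0 mulmx0.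
Qed.

Lemma key_semi m (M : 'M[C]_m) u :
  M = 0 \/ (M^T = M /\ M \in unitmx /\ possemidef (mxRe M)) -> 0 <= 'Re (hf M u).
Proof.
case=> [->|[MT [_ Mp]]]; first by rewrite hf0 raddf0.
by rewrite hf_Re //; apply: hf_psd.
Qed.

End Herm.

Section Struct.
Variable C : numClosedFieldType.

Definition blk (m p : nat) (w : 'cV[C]_(m * p)) (i : 'I_m) : 'cV[C]_p :=
  \col_q w (mxvec_index i q) 0.

Lemma hf_blkdiag m p (F : 'I_m -> 'M[C]_p) w :
  hf (blkdiag F) w = \sum_i hf (F i) (blk w i).
Proof.
rewrite hfE sum_mxvec; apply: eq_bigr => i _; rewrite hfE; apply: eq_bigr => q _.
rewrite sum_mxvec (bigD1 i) //= [X in _ + X]big1 ?addr0.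
  by apply: eq_bigr => r _; rewrite !mxE !gsplitK /= eqxx mul1r.
move=> j /negbTE ji; apply: big1 => r _.
by rewrite !mxE !gsplitK /= eq_sym ji mul0r mulr0 mul0r.
Qed.

Lemma sum_delta (V : lmodType C) m (X : 'I_m -> V) j :
  \sum_a ((a == j)%:R *: X a) = X j.
Proof.
rewrite (bigD1 j) //= eqxx scale1r [X in _ + X]big1 ?addr0 // => a /negbTE ->.
by rewrite scale0r.
Qed.

Lemma kron_mul_blk r s p (A : 'M[C]_(r, s)) (v : 'cV[C]_(s * p)) l :
  blk (kron_id p A *m v) l = \sum_a A l a *: blk v a.
Proof.
apply/matrixP => q j; rewrite (ord1 j) !mxE sum_mxvec summxE; apply: eq_bigr => a _.
rewrite (bigD1 q) //= [X in _ + X]big1 ?addr0.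
  by rewrite !mxE !gsplitK eqxx /= mulr1.
move=> r' /negbTE rq; by rewrite !mxE !gsplitK /= eq_sym rq mulr0 mul0r.
Qed.

Lemma conj_kron n p (L : {set 'I_n * 'I_n}) :
  map_mx Num.conj (kron_id p (incidence C L)) = kron_id p (incidence C L).
Proof.
by apply/matrixP => k l; rewrite !mxE rmorphM rmorphB !rmorph_nat.
Qed.

Lemma energy n p (L : {set 'I_n * 'I_n}) (Zl : 'I_n * 'I_n -> 'M[C]_p)
  (Yt : 'I_n -> 'M[C]_p) (v : 'cV[C]_(n * p)) :
  hf (admittance L Zl Yt) v =
  \sum_(l < #|L|) hf (invmx (Zl (enum_val l))) (blk v (enum_val l).1 - blk v (enum_val l).2)
  + \sum_a hf (Yt a) (blk v a).
Proof.
rewrite /admittance hfD hf_blkdiag; congr (_ + _).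
set K := kron_id p (incidence C L).
have -> : hf (K^T *m blkdiag (fun l : 'I_#|L| => invmx (Zl (enum_val l))) *m K) v
  = hf (blkdiag (fun l : 'I_#|L| => invmx (Zl (enum_val l)))) (K *m v).
  by rewrite /hf map_mxM conj_kron trmx_mul !mulmxA.
rewrite hf_blkdiag; apply: eq_bigr => l _; congr hf.
rewrite kron_mul_blk.
under eq_bigr => a _ do rewrite mxE scalerBl.
by rewrite sumrB !sum_delta.
Qed.

End Struct.

Lemma dot_split (C : numClosedFieldType) n p (S : {set 'I_n}) (a b : 'cV[C]_(n * p)) :
  (a^T *m b) 0 0 = ((subvec S a)^T *m subvec S b) 0 0
                 + ((subvec (~: S) a)^T *m subvec (~: S) b) 0 0.
Proof.
rewrite !mxE (sum_split S); congr (_ + _); apply: eq_bigr => k _; by rewrite !mxE.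
Qed.

Lemma subvec_map (C : numClosedFieldType) n p (S : {set 'I_n}) (a : 'cV[C]_(n * p)) :
  subvec S (map_mx Num.conj a) = map_mx Num.conj (subvec S a).
Proof. by apply/matrixP => i j; rewrite !mxE. Qed.

Lemma hfv0 (C : numClosedFieldType) m (M : 'M[C]_m) : hf M 0 = 0.
Proof. by rewrite /hf mulmx0 mxE. Qed.

Unset Implicit Arguments.
Set Strict Implicit.

Theorem lemma1 (C : numClosedFieldType) (n p : nat) (L : {set 'I_n * 'I_n})
  (Zl : 'I_n * 'I_n -> 'M[C]_p) (Yt : 'I_n -> 'M[C]_p)
  (V I : 'cV[C]_(n * p)) (Z : {set 'I_n}) :
  weakly_connected L ->
  (forall l, l \in L ->
     (Zl l)^T = Zl l /\ Zl l \in unitmx /\ posdef (mxRe (Zl l))) ->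
  (forall t, Yt t = 0 \/
     ((Yt t)^T = Yt t /\ Yt t \in unitmx /\ possemidef (mxRe (Yt t)))) ->
  I = admittance L Zl Yt *m V ->
  Z != set0 -> Z != setT ->
  subvec Z I = 0 ->
  let Y := admittance L Zl Yt in
  let YZZ := subblock Z Z Y in
  let YZc := subblock Z (~: Z) Y in
  let YcZ := subblock (~: Z) Z Y in
  let Ycc := subblock (~: Z) (~: Z) Y in
  YZZ \in unitmx /\
  subvec Z V = - (invmx YZZ *m YZc *m subvec (~: Z) V) /\
  subvec (~: Z) I = (Ycc - YcZ *m invmx YZZ *m YZc) *m subvec (~: Z) V.
Proof.
move=> conn HZl HYt HI Zn0 ZnT IZ0 Y YZZ YZc YcZ Ycc.
have inj : forall x : 'cV[C]_(#|Z| * p), YZZ *m x = 0 -> x = 0.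
  move=> x Hx.
  pose v : 'cV[C]_(n * p) :=
    \col_k (if [pick k' | @sidx n p Z k' == k] is Some k' then x k' 0 else 0).
  have vZ : subvec Z v = x.
    apply/matrixP => k j; rewrite (ord1 j) !mxE.
    case: pickP => [k' /eqP /sidx_inj -> // | /(_ k)]; by rewrite eqxx.
  have vc : subvec (~: Z) v = 0.
    apply/matrixP => k j; rewrite !mxE.
    case: pickP => [k' /eqP e | //]; by have := @sidx_disj n p Z k' k; rewrite e eqxx.
  have YvZ : subvec Z (Y *m v) = 0 by rewrite subvec_mul vZ vc mulmx0 addr0 Hx.
  have map0 : map_mx Num.conj (0 : 'cV[C]_(#|~: Z| * p)) = 0.
    by apply/matrixP => i j; rewrite !mxE rmorph0.
  have E0 : hf Y v = 0.
    rewrite /hf -mulmxA (dot_split Z) YvZ !subvec_map vc map0 mulmx0 trmx0 mul0mx.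
    by rewrite !mxE addr0.
  move: E0; rewrite energy => /(congr1 (@Re C)); rewrite raddf0 raddfD !raddf_sum.
  set d := fun l : 'I_#|L| => blk v (enum_val l).1 - blk v (enum_val l).2.
  have g1 : forall l : 'I_#|L|, 0 <= 'Re (hf (invmx (Zl (enum_val l))) (d l)).
    move=> l; have [-> | dnz] := eqVneq (d l) 0; first by rewrite hfv0 raddf0.
    have [ZT [Zu Zpd]] := HZl _ (enum_valP l).
    exact/ltW/key_pos.
  have g2 : forall a, 0 <= 'Re (hf (Yt a) (blk v a)) by move=> a; apply: key_semi.
  move/eqP; rewrite paddr_eq0; [| by apply: sumr_ge0 => i _; apply: g1 | by apply: sumr_ge0 => i _; apply: g2].
  case/andP => /eqP s1 _.
  have d0 : forall l, d l = 0.
    move=> l; apply/eqP; apply: contraT => dnz.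
    have [ZT [Zu Zpd]] := HZl _ (enum_valP l).
    have := key_pos ZT Zu Zpd dnz.
    by rewrite (psumr_eq0P (fun i _ => g1 i) s1) // ltxx.
  have edge0 a b : (a, b) \in L -> blk v a = blk v b.
    move=> ab; have := d0 (enum_rank_in ab (a, b)).
    by rewrite /d enum_rankK_in // => /eqP; rewrite subr_eq0 => /eqP.
  have edge a b : ((a, b) \in L) || ((b, a) \in L) -> blk v a = blk v b.
    by case/orP => [/edge0 | /edge0 ->].
  have cst i j : blk v i = blk v j.
    have /connectP [s pth ->] := conn i j.
    elim: s i pth => [|c s IH] i //= /andP [e pth].
    by rewrite (edge _ _ e); exact: IH.
  have : ~~ (setT \subset Z) by rewrite subTset.
  case/subsetPn => j0 _ j0Z.
  have Hj0 : j0 \in ~: Z by rewrite in_setC.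
  have bj0 : blk v j0 = 0.
    apply/matrixP => q c; rewrite (ord1 c) !mxE.
    have := congr1 (fun A : 'cV[C]_(#|~: Z| * p) => A (mxvec_index (enum_rank_in Hj0 j0) q) 0) vc.
    by rewrite /= !mxE sidxE enum_rankK_in.
  have v0 : v = 0.
    apply/matrixP => k c; rewrite (ord1 c) -(gsplitV k).
    have := congr1 (fun A : 'cV[C]_p => A (gsplit k).2 0) (cst (gsplit k).1 j0).
    by rewrite bj0 !mxE.
  by rewrite -vZ v0; apply/matrixP => i j; rewrite !mxE.
have Yu : YZZ \in unitmx.
  rewrite unitmxE unitfE -det_tr; apply/negP => /det0P [r rnz rY].
  have : YZZ *m r^T = 0 by rewrite -[YZZ]trmxK -trmx_mul rY trmx0.
  move/inj/(congr1 trmx); rewrite trmxK trmx0 => r0.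
  by rewrite r0 eqxx in rnz.
have h1 : subvec Z I = YZZ *m subvec Z V + YZc *m subvec (~: Z) V.
  by rewrite HI subvec_mul.
have e : YZZ *m subvec Z V = - (YZc *m subvec (~: Z) V).
  by apply/eqP; rewrite -subr_eq0 opprK -h1 IZ0.
have VZ : subvec Z V = - (invmx YZZ *m YZc *m subvec (~: Z) V).
  by rewrite -(mulKmx Yu (subvec Z V)) e mulmxN mulmxA.
split=> //; split=> //.
rewrite HI subvec_mul setCK VZ mulmxN mulmxBl !mulmxA.
by [].
Qed.
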